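(* Let $\mathcal{C}$ be a polyhedral complex in $\mathbb{R}^n$ all of whose cells are pointed. Then: (a) if $P_1,P_2\in\mathcal{C}$ and $p\in P_1\cap P_2$, then $\mathrm{base}_{P_1}(p)=\mathrm{base}_{P_2}(p)$, so $\mathrm{base}_{\mathcal{C}}:|\mathcal{C}|\to|\mathrm{com.part}(\mathcal{C})|$, $\mathrm{base}_{\mathcal{C}}(p)=\mathrm{base}_P(p)$ for any cell $P\ni p$, is well defined; (b) $\mathrm{base}_{\mathcal{C}}$ is continuous; and (c) $\Phi(p,t)=t\,\mathrm{base}_{\mathcal{C}}(p)+(1-t)p$ is a strong deformation retraction of $|\mathcal{C}|$ onto $|\mathrm{com.part}(\mathcal{C})|$.
   Context: A polyhedral complex is a finite set of polyhedral sets (cells) closed under taking faces in which any two cells intersect in a common face; $|\mathcal{C}|$ is the union of cells. For a polyhedral set $P$, $\mathrm{char.cone}(P)=\{y:x+y\in P\ \forall x\in P\}$; $P$ is pointed if $\mathrm{char.cone}(P)\cap-\mathrm{char.cone}(P)=\{0\}$. $K_P$ is the convex hull of the vertices of $P$, $\widetilde K_P$ the set of all faces of $K_P$, and $\mathrm{com.part}(\mathcal{C})=\bigcup_{C\in\mathcal{C}}\widetilde K_C$, with $|\mathrm{com.part}(\mathcal{C})|=\bigcup_C K_C$. For $p\in P$, $\mathrm{base}_P(p)$ is the unique point $x\in K_P$ with $p-x\in\mathrm{char.cone}(P)$ minimizing $|p-x|$. A strong deformation retraction of $X$ onto $A$ is a continuous $H:X\times[0,1]\to X$ with $H(x,0)=x$,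 $H(x,1)\in A$, $H(a,t)=a$ for $a\in A$. *)

(* Defs.v *)
From HB Require Import structures.
From mathcomp Require Import all_boot all_order all_algebra.
From mathcomp Require Import all_classical all_reals all_analysis.
Set Implicit Arguments. Unset Strict Implicit. Unset Printing Implicit Defensive.
Import Order.TTheory GRing.Theory Num.Theory.
Import numFieldNormedType.Exports.
Local Open Scope classical_set_scope.
Local Open Scope ring_scope.

Section PolyDefs.
Variables (R : realType) (n : nat).
Local Notation V := ('rV[R]_n).

Definition dotp (u v : V) : R := \sum_(i < n) u ord0 i * v ord0 i.
Definition enorm (u : V) : R := Num.sqrt (dotp u u).

Definition polyhedral (P : set V) : Prop :=
  exists (m : nat) (a : 'I_m -> V) (b : 'I_m -> R),
    P = [set x | forall i, dotp (a i) x <= b i].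

(* F is a face of P: intersection of P with a supporting hyperplane
   (c = 0, d = 0 gives P itself, c = 0, d = 1 gives the empty face) *)
Definition face (P F : set V) : Prop :=
  exists (c : V) (d : R), (forall x, P x -> dotp c x <= d) /\
    F = P `&` [set x | dotp c x = d].

Definition polyhedral_complex (C : set (set V)) : Prop :=
  [/\ finite_set C,
      (forall P, C P -> polyhedral P),
      (forall P F, C P -> face P F -> C F) &
      (forall P Q, C P -> C Q -> face P (P `&` Q) /\ face Q (P `&` Q))].

Definition cplx_support (C : set (set V)) : set V := [set x | exists2 P, C P & P x].

Definition char_cone (P : set V) : set V := [set y | forall x, P x -> P (x + y)].

Definition pointed (P : set V) : Prop :=
  char_cone P `&` [set - y | y in char_cone P] = [set 0].

Definition vertex (P : set V) (v : V) : Prop := face P [set v].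

Definition conv_hull (S : set V) : set V :=
  [set x | exists (k : nat) (l : 'I_k -> R) (v : 'I_k -> V),
     [/\ forall i, 0 <= l i, \sum_(i < k) l i = 1, forall i, S (v i) &
         x = \sum_(i < k) l i *: v i]].

Definition KP (P : set V) : set V := conv_hull (vertex P).

Definition com_part (C : set (set V)) : set (set V) :=
  [set F | exists2 P, C P & face (KP P) F].

Definition is_base (P : set V) (p x : V) : Prop :=
  [/\ KP P x, char_cone P (p - x) &
      forall y, KP P y -> char_cone P (p - y) -> enorm (p - x) <= enorm (p - y)].

(* base_P(p): the (unique, see theorem) base point *)
Definition base (P : set V) (p : V) : V := xget 0 (is_base P p).

Definition baseC (C : set (set V)) (p : V) : V :=
  xget 0 [set x | exists P, C P /\ P p /\ x = base P p].

End PolyDefs.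

Definition strong_deformation_retraction (R : realType) (T : topologicalType)
  (X A : set T) (H : T * R -> T) : Prop :=
  A `<=` X /\
  [/\ (forall x t, X x -> (0 <= t <= 1)%R -> X (H (x, t))),
      {within X `*` `[0%R, 1%R], continuous H},
      (forall x, X x -> H (x, 0%R) = x),
      (forall x, X x -> A (H (x, 1%R))) &
      (forall a t, A a -> (0 <= t <= 1)%R -> H (a, t) = a)].

(* Main.v *)
Require Import Defs.
From HB Require Import structures.
From mathcomp Require Import all_boot all_order all_algebra.
From mathcomp Require Import all_classical all_reals all_analysis finmap.
From mathcomp Require Import ring lra.
Import Order.TTheory GRing.Theory Num.Theory.
Import numFieldNormedType.Exports.
Local Open Scope classical_set_scope.
Local Open Scope ring_scope.
Set Implicit Arguments. Unset Strict Implicit. Unset Printing Implicit Defensive.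

Section Lin.
Variables (R : realType) (n : nat).
Local Notation V := ('rV[R]_n).
Implicit Types u v w : V.

Lemma dotpC u v : dotp u v = dotp v u.
Proof. by apply: eq_bigr => i _; rewrite mulrC. Qed.

Lemma dotpDr u v w : dotp u (v + w) = dotp u v + dotp u w.
Proof. by rewrite /dotp -big_split; apply: eq_bigr => i _; rewrite mxE mulrDr. Qed.

Lemma dotpZr u (k : R) v : dotp u (k *: v) = k * dotp u v.
Proof. by rewrite /dotp mulr_sumr; apply: eq_bigr => i _; rewrite mxE mulrCA. Qed.

Lemma dotpNr u v : dotp u (- v) = - dotp u v.
Proof. by rewrite -scaleN1r dotpZr mulN1r. Qed.

Lemma dotpBr u v w : dotp u (v - w) = dotp u v - dotp u w.
Proof. by rewrite dotpDr dotpNr. Qed.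

Lemma dotp0r u : dotp u 0 = 0.
Proof. by rewrite -(scale0r (0:V)) dotpZr mul0r. Qed.

Lemma dotpDl u v w : dotp (v + w) u = dotp v u + dotp w u.
Proof. by rewrite dotpC dotpDr !(dotpC u). Qed.
Lemma dotpZl u (k : R) v : dotp (k *: v) u = k * dotp v u.
Proof. by rewrite dotpC dotpZr dotpC. Qed.
Lemma dotpNl u v : dotp (- v) u = - dotp v u.
Proof. by rewrite dotpC dotpNr dotpC. Qed.
Lemma dotpBl u v w : dotp (v - w) u = dotp v u - dotp w u.
Proof. by rewrite dotpDl dotpNl. Qed.
Lemma dotp0l u : dotp 0 u = 0.
Proof. by rewrite dotpC dotp0r. Qed.

Lemma dotp_sum I (r : seq I) (P : pred I) (F : I -> V) u :
  dotp u (\sum_(i <- r | P i) F i) = \sum_(i <- r | P i) dotp u (F i).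
Proof.
elim/big_rec2: _; first by rewrite dotp0r.
by move=> i y1 y2 _ <-; rewrite dotpDr.
Qed.

Lemma dotp_ge0 u : 0 <= dotp u u.
Proof. by apply: sumr_ge0 => i _; rewrite -expr2 sqr_ge0. Qed.

Lemma dotp_eq0 u : dotp u u = 0 -> u = 0.
Proof.
move=> /eqP; rewrite psumr_eq0; last by move=> i _; rewrite -expr2 sqr_ge0.
move=> /allP H; apply/rowP => j; rewrite mxE.
by have := H j (mem_index_enum j); rewrite /= mulf_eq0 orbb => /eqP.
Qed.

Lemma enorm_ge0 u : 0 <= enorm u.
Proof. exact: sqrtr_ge0. Qed.

Lemma enorm_sq u : enorm u ^+ 2 = dotp u u.
Proof. by rewrite sqr_sqrtr // dotp_ge0. Qed.

Lemma enorm0 : enorm (0 : V) = 0.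
Proof. by rewrite /enorm dotp0r sqrtr0. Qed.

Lemma enorm_eq0 u : enorm u = 0 -> u = 0.
Proof. by move=> H; apply: dotp_eq0; rewrite -enorm_sq H expr0n. Qed.

Lemma enormN u : enorm (- u) = enorm u.
Proof. by rewrite /enorm dotpNl dotpNr opprK. Qed.

Lemma enormB u v : enorm (u - v) = enorm (v - u).
Proof. by rewrite -enormN opprB. Qed.

Lemma enormZ (k : R) u : enorm (k *: u) = `|k| * enorm u.
Proof.
by rewrite /enorm dotpZl dotpZr mulrA -expr2 sqrtrM ?sqr_ge0 // sqrtr_sqr.
Qed.

Lemma cauchy_schwarz u v : dotp u v ^+ 2 <= dotp u u * dotp v v.
Proof.
have [v0|vn0] := eqVneq v 0; first by rewrite v0 !dotp0r expr0n mulr0.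
have vp : 0 < dotp v v.
  rewrite lt_def dotp_ge0 andbT; apply/eqP => /dotp_eq0 /eqP; exact/negP.
set t := dotp u v / dotp v v.
have := dotp_ge0 (u - t *: v).
rewrite dotpBl !dotpBr !dotpZl !dotpZr (dotpC v u).
rewrite /t => H.
have vn : dotp v v != 0 by rewrite gt_eqF.
have : 0 <= (dotp u u * dotp v v - dotp u v ^+ 2) / dotp v v.
  by apply: le_trans H _; rewrite le_eqVlt; apply/orP; left; apply/eqP; field.
rewrite pmulr_lge0 ?invr_gt0 // subr_ge0; done.
Qed.

Lemma dotp_le u v : dotp u v <= enorm u * enorm v.
Proof.
have h : `|dotp u v| <= enorm u * enorm v.
  rewrite -(ger0_norm (mulr_ge0 (enorm_ge0 u) (enorm_ge0 v))).
  by rewrite -ler_sqr ?normr_ge0 // !real_normK ?num_real // exprMn !enorm_sq cauchy_schwarz.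
exact: le_trans (ler_norm _) h.
Qed.

Lemma enormD u v : enorm (u + v) <= enorm u + enorm v.
Proof.
rewrite -(ler_pXn2r (_ : 0 < 2)%N) ?nnegrE ?addr_ge0 ?enorm_ge0 //.
rewrite enorm_sq dotpDl !dotpDr (dotpC v u) sqrrD !enorm_sq.
have := dotp_le u v; lra.
Qed.

End Lin.

Section Poly1.
Variables (R : realType) (n : nat).
Local Notation V := ('rV[R]_n).
Implicit Types (P : set V) (u v w x y z : V).

Lemma pos_lb (I : finType) (Q : pred I) (f : I -> R) :
  (forall i, Q i -> 0 < f i) -> exists2 s : R, 0 < s & forall i, Q i -> s <= f i.
Proof.
move=> hf.
have H : \forall s \near (0:R)^'+, (0 < s) /\ forall i, Q i -> s <= f i.
  near=> s; split; first by near: s; exact: nbhs_right_gt.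
  near: s; apply: filter_forall => i.
  case Qi: (Q i); last by apply: nearW.
  by have := nbhs_right_le (hf i Qi); apply: filterS => s h _.
by have [s [s0 Hs]] := filter_ex H; exists s.
Unshelve. all: end_near.
Qed.

Definition extreme P v := P v /\ forall y, P (v + y) -> P (v - y) -> y = 0.

Lemma vertex_extreme P v : vertex P v -> extreme P v.
Proof.
move=> [c [d [Hle HF]]].
have [Pv cv] : P v /\ dotp c v = d by have : [set v] v by []; rewrite HF; case.
split=> // y Py1 Py2.
have h1 := Hle _ Py1; have h2 := Hle _ Py2.
rewrite dotpDr in h1; rewrite dotpBr in h2.
have cy : dotp c y = 0 by apply/eqP; rewrite eq_le; apply/andP; split; lra.
have : (P `&` [set x | dotp c x = d]) (v + y) by split => //=; rewrite dotpDr cy addr0.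
rewrite -HF /= => h; by rewrite -(addKr v y) h addNr.
Qed.

Lemma cone_iter P y z : char_cone P y -> P z -> forall k : nat, P (z + k%:R *: y).
Proof.
move=> hy Pz; elim=> [|k IH]; first by rewrite scale0r addr0.
by rewrite -[k.+1]addn1 natrD scalerDl scale1r addrA; apply: hy.
Qed.

Lemma cone_supp P c d z y : (forall x, P x -> dotp c x <= d) -> P z ->
  char_cone P y -> dotp c y <= 0.
Proof.
move=> hle Pz hy; rewrite leNgt; apply/negP => cy.
set k := Num.Def.archi_bound (`|d - dotp c z| / dotp c y).
have hk : `|d - dotp c z| / dotp c y < k%:R by apply: archi_boundP; rewrite divr_ge0 // ltW.
rewrite ltr_pdivrMr // in hk.
have := hle _ (cone_iter hy Pz k); rewrite dotpDr dotpZr.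
have := ler_norm (d - dotp c z); lra.
Qed.

End Poly1.

Section Poly2.
Variables (R : realType) (n m : nat) (a : 'I_m -> 'rV[R]_n) (b : 'I_m -> R).
Local Notation V := ('rV[R]_n).
Implicit Types (u v w x y z : V).
Definition Pab : set V := [set x | forall i, dotp (a i) x <= b i].

Lemma cone_rep y : (forall i, dotp (a i) y <= 0) -> char_cone Pab y.
Proof. by move=> hy x Px i; rewrite dotpDr; have := Px i; have := hy i; lra. Qed.

Lemma cone_repE z y : Pab z -> char_cone Pab y -> forall i, dotp (a i) y <= 0.
Proof. by move=> Pz hy i; apply: (cone_supp (d := b i)) Pz hy => x; apply. Qed.

Lemma Pab_conv x y t : Pab x -> Pab y -> 0 <= t <= 1 -> Pab (t *: x + (1 - t) *: y).
Proof.
move=> Px Py /andP[t0 t1] i; rewrite dotpDr !dotpZr.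
have := Px i; have := Py i => h1 h2.
have -> : b i = t * b i + (1 - t) * b i by ring.
by apply: lerD; apply: ler_wpM2l => //; rewrite subr_ge0.
Qed.

Lemma small_move v y : Pab v -> (forall i, dotp (a i) v = b i -> dotp (a i) y = 0) ->
  exists2 e : R, 0 < e & Pab (v + e *: y) /\ Pab (v - e *: y).
Proof.
move=> Pv hact.
have hpos : forall i, dotp (a i) v != b i ->
    0 < (b i - dotp (a i) v) / (`|dotp (a i) y| + 1).
  move=> i /= hi; apply: divr_gt0; last by rewrite ltr_pwDr // normr_ge0.
  by rewrite subr_gt0 lt_neqAle hi Pv.
have [s s0 hs] := pos_lb hpos.
exists s => //; split.
- move=> i; rewrite dotpDr dotpZr.
  have [e|ne] := eqVneq (dotp (a i) v) (b i).
    by rewrite hact // mulr0 addr0 e.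
  have := hs i ne; rewrite ler_pdivlMr ?ltr_pwDr ?normr_ge0 // => h.
  have := ler_norm (dotp (a i) y); nra.
- move=> i; rewrite dotpBr dotpZr.
  have [e|ne] := eqVneq (dotp (a i) v) (b i).
    by rewrite hact // mulr0 subr0 e.
  have := hs i ne; rewrite ler_pdivlMr ?ltr_pwDr ?normr_ge0 // => h.
  have := ler_norm (- dotp (a i) y); rewrite normrN; nra.
Qed.

Lemma extreme_vertex v : extreme Pab v -> vertex Pab v.
Proof.
move=> [Pv hext].
pose Q := fun i => dotp (a i) v == b i.
exists (\sum_(i | Q i) a i), (\sum_(i | Q i) b i); split.
  move=> x Px; rewrite dotpC dotp_sum; apply: ler_sum => i _.
  by rewrite dotpC; apply: Px.
apply/seteqP; split => x /=.
  move=> ->; split => //; rewrite dotpC dotp_sum; apply: eq_bigr => i /eqP.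
  by rewrite dotpC.
move=> [Px].
rewrite dotpC dotp_sum => /eqP; rewrite eq_sym -subr_eq0 -sumrB => /eqP.
move=> /psumr_eq0P hz.
have hx : forall i, Q i -> dotp (a i) x = b i.
  move=> i Qi; apply/eqP; rewrite eq_sym -subr_eq0 dotpC hz //.
  by move=> j _; rewrite subr_ge0 dotpC; apply: Px.
have hy : forall i, dotp (a i) v = b i -> dotp (a i) (x - v) = 0.
  by move=> i hi; rewrite dotpBr hi hx ?subrr //; apply/eqP.
have [e e0 [h1 h2]] := small_move Pv hy.
have := hext _ h1 h2; move/eqP; rewrite scaler_eq0 gt_eqF //= subr_eq0.
by move/eqP.
Qed.

Definition inact v : {set 'I_m} := [set i | dotp (a i) v != b i].

Lemma extreme_inj v w : extreme Pab v -> extreme Pab w -> inact v = inact w -> v = w.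
Proof.
move=> [Pv hv] [Pw _] hvw.
have hy : forall i, dotp (a i) v = b i -> dotp (a i) (w - v) = 0.
  move=> i hi; have : i \notin inact v by rewrite inE hi eqxx.
  rewrite hvw inE negbK => /eqP hw; by rewrite dotpBr hi hw subrr.
have [e e0 [h1 h2]] := small_move Pv hy.
have := hv _ h1 h2; move/eqP; rewrite scaler_eq0 gt_eqF //= subr_eq0.
by move/eqP.
Qed.

End Poly2.

Section Topo.
Variables (R : realType).

Lemma near_dist (U : normedModType R) (x : U) (d : R) : 0 < d ->
  \forall y \near x, `|x - y| < d.
Proof. move=> d0. exact: ((@cvgrPdist_lt _ _ _ (nbhs x) _ id x).1 cvg_id d d0). Qed.

Lemma lip_cont (U W : normedModType R) (f : U -> W) (K : R) :
  (forall x y, `|f x - f y| <= K * `|x - y|) -> continuous f.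
Proof.
move=> H x; apply/cvgrPdist_lt => e e0.
have K1 : 0 < `|K| + 1 by rewrite ltr_pwDr // normr_ge0.
have := near_dist x (divr_gt0 e0 K1); apply: filterS => y hy.
apply: (le_lt_trans (H x y)); apply: (le_lt_trans (y := `|K| * `|x - y|)).
  by apply: ler_wpM2r; [exact: normr_ge0 | exact: ler_norm].
rewrite ltr_pdivlMr // in hy.
have := normr_ge0 (x - y); have := normr_ge0 K; nra.
Qed.

Variable n : nat.
Local Notation V := ('rV[R]_n).

Lemma coord_le (u : V) i : `|u ord0 i| <= `|u|.
Proof.
rewrite [leRHS]/Num.Def.normr /= mx_normrE; apply/bigmax_geP; right; exists (ord0, i) => //.
Qed.

Lemma mxnorm_le_enorm (u : V) : `|u| <= enorm u.
Proof.
rewrite [leLHS]/Num.Def.normr /= mx_normrE; apply/bigmax_leP; split; first exact: enorm_ge0.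
move=> [i j] _ /=; rewrite (ord1 i).
rewrite -(sqrtr_sqr (u ord0 j)) ler_sqrt ?dotp_ge0 //.
rewrite /dotp (bigD1 j) //= -expr2 lerDl; apply: sumr_ge0 => k _.
by rewrite -expr2 sqr_ge0.
Qed.

Lemma enorm_le_mxnorm (u : V) : enorm u <= (n%:R + 1) * `|u|.
Proof.
have h0 : 0 <= (n%:R + 1) * `|u| by apply: mulr_ge0 => //; rewrite addr_ge0.
rewrite -(ger0_norm h0) -sqrtr_sqr ler_sqrt ?sqr_ge0 //.
apply: (le_trans (y := \sum_(i < n) `|u| ^+ 2)).
  apply: ler_sum => i _; rewrite -expr2 -real_normK ?num_real //.
  by rewrite lerXn2r ?nnegrE ?normr_ge0 ?coord_le.
rewrite sumr_const card_ord exprMn -[_ *+ n]mulr_natl ler_wpM2r ?sqr_ge0 //.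
have : (n%:R : R) <= n%:R + 1 by rewrite lerDl.
have := ler0n R n; nra.
Qed.

Lemma dotp_norm (u v : V) : `|dotp u v| <= enorm u * enorm v.
Proof.
rewrite ler_norml dotp_le andbT.
by have := dotp_le u (- v); rewrite dotpNr enormN; lra.
Qed.

Lemma dotp_cont (c : V) : continuous (dotp c).
Proof.
apply: (@lip_cont V R^o _ (enorm c * (n%:R + 1))) => x y.
rewrite -dotpBr; apply: (le_trans (dotp_norm _ _)).
by rewrite -mulrA ler_wpM2l ?enorm_ge0 // enorm_le_mxnorm.
Qed.

Lemma closed_half (c : V) (d : R) : closed [set x | dotp c x <= d].
Proof.
have := (continuous_closedP (dotp c)).1 (@dotp_cont c) _ (@closed_le R d).
by [].
Qed.

Lemma Pab_closed m (a : 'I_m -> V) b : closed (Pab a b).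
Proof.
have -> : Pab a b = \bigcap_(i in [set: 'I_m]) [set x | dotp (a i) x <= b i].
  apply/seteqP; split => x /= h i; first by move=> _; apply: h.
  by apply: h.
by apply: closed_bigI => i _; apply: closed_half.
Qed.

End Topo.

Section Cvx.
Variables (R : realType) (n : nat).
Local Notation V := ('rV[R]_n).

Definition cvx N (w : 'I_N -> V) : set V :=
  [set x | exists l : 'I_N -> R,
     [/\ forall i, 0 <= l i, \sum_i l i = 1 & x = \sum_i l i *: w i]].

Lemma cvx_conv N (w : 'I_N -> V) x y t : cvx w x -> cvx w y -> 0 <= t <= 1 ->
  cvx w (t *: x + (1 - t) *: y).
Proof.
move=> [l [l0 l1 ->]] [l' [l0' l1' ->]] /andP[t0 t1].
exists (fun i => t * l i + (1 - t) * l' i); split.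
- by move=> i; apply: addr_ge0; apply: mulr_ge0 => //; rewrite subr_ge0.
- by rewrite big_split /= -!mulr_sumr l1 l1'; ring.
- rewrite !scaler_sumr -big_split /=; apply: eq_bigr => i _.
  by rewrite [RHS]scalerDl !scalerA.
Qed.

Lemma cvx_w N (w : 'I_N -> V) i : cvx w (w i).
Proof.
exists (fun j => (j == i)%:R); split.
- by move=> j; rewrite ler0n.
- by rewrite (bigD1 i) //= eqxx big1 ?addr0 // => j /negPf ->.
- by rewrite (bigD1 i) //= eqxx scale1r big1 ?addr0 // => j /negPf ->; rewrite scale0r.
Qed.

Lemma enorm_sum N (F : 'I_N -> V) : enorm (\sum_i F i) <= \sum_i enorm (F i).
Proof.
elim/big_ind2: _ => //; first by rewrite enorm0.
by move=> x1 x2 y1 y2 h1 h2; apply: (le_trans (enormD _ _)); apply: lerD.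
Qed.

Lemma cvx_bound N (w : 'I_N -> V) x : cvx w x -> enorm x <= \sum_i enorm (w i).
Proof.
move=> [l [l0 l1 ->]]; apply: (le_trans (enorm_sum _)); apply: ler_sum => i _.
rewrite enormZ ger0_norm // ler_piMl ?enorm_ge0 //.
rewrite -l1 (bigD1 i) //= lerDl; exact: sumr_ge0.
Qed.

Lemma cvx_compact N (w : 'I_N -> V) : compact (cvx w).
Proof.
pose D : set 'rV[R]_N := [set l | (forall i, 0 <= l ord0 i) /\ \sum_i l ord0 i = 1].
pose f := fun l : 'rV[R]_N => \sum_i l ord0 i *: w i.
have -> : cvx w = f @` D.
  apply/seteqP; split => x.
    move=> [l [l0 l1 ->]]; exists (\row_i l i).
      by rewrite /D /=; split; [move=> i; rewrite mxE | under eq_bigr do rewrite mxE].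
    by rewrite /f; apply: eq_bigr => i _; rewrite mxE.
  by move=> [l [l0 l1] <-]; exists (fun i => l ord0 i).
apply: continuous_compact.
  apply: continuous_subspaceT.
  apply: (@lip_cont R _ _ f (\sum_i `|w i|)) => x y.
  rewrite /f -sumrB mulr_suml; apply: (le_trans (ler_norm_sum _ _ _)).
  apply: ler_sum => i _; rewrite -scalerBl normrZ [X in _ <= X]mulrC ler_wpM2r ?normr_ge0 //.
  have -> : x ord0 i - y ord0 i = (x - y) ord0 i by rewrite !mxE.
  exact: coord_le.
apply: bounded_closed_compact.
  rewrite /= /bounded_near; near=> M => l [l0 l1] /=.
  apply: (le_trans (y := 1)); last by near: M; apply: nbhs_pinfty_ge; rewrite num_real.
  rewrite [leLHS]/Num.Def.normr /= mx_normrE; apply/bigmax_leP; split => // -[i j] _ /=.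
  rewrite (ord1 i) ger0_norm // -l1 (bigD1 j) //= lerDl; exact: sumr_ge0.
have -> : D = (\bigcap_(i in [set: 'I_N]) [set l : 'rV[R]_N | 0 <= l ord0 i]) `&`
   ([set l | \sum_i l ord0 i <= 1] `&` [set l | 1 <= \sum_i l ord0 i]).
  apply/seteqP; split => l.
    by move=> [l0 l1]; split; [move=> i _; apply: l0 | split => /=; rewrite l1].
  by move=> [l0 [h1 h2]]; split; [move=> i; apply: l0 | apply/eqP; rewrite eq_le h1 h2].
have sc : continuous (fun l : 'rV[R]_N => \sum_i l ord0 i : R^o).
  apply: (@lip_cont R _ R^o _ N%:R) => x y.
  rewrite -sumrB; apply: (le_trans (ler_norm_sum _ _ _)).
  apply: (le_trans (y := \sum_(i < N) `|x - y|)); last by rewrite sumr_const card_ord mulr_natl.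
  apply: ler_sum => i _.
  have -> : x ord0 i - y ord0 i = (x - y) ord0 i by rewrite !mxE.
  exact: coord_le.
apply: closedI.
  apply: closed_bigI => i _.
  exact: ((continuous_closedP _).1 (@coord_continuous R 1 N ord0 i) _ (@closed_ge R 0)).
apply: closedI.
  exact: ((continuous_closedP _).1 sc _ (@closed_le R 1)).
exact: ((continuous_closedP _).1 sc _ (@closed_ge R 1)).
Unshelve. all: end_near.
Qed.

Lemma conv_hull_fset (X : {fset V}) :
  conv_hull [set` X] = cvx (fun i : 'I_(size X) => nth 0 (X : seq V) i).
Proof.
apply/seteqP; split => x.
  move=> [k [l [v [l0 l1 vX ->]]]].
  have hf : forall j, (index (v j) X < size X)%N by move=> j; rewrite index_mem; exact: vX.
  pose f := fun j => Ordinal (hf j).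
  have fv : forall j, nth 0 (X : seq V) (f j) = v j by move=> j; rewrite nth_index //; exact: vX.
  exists (fun i => \sum_(j | f j == i) l j); split.
  - by move=> i; apply: sumr_ge0.
  - by rewrite -l1 (partition_big f xpredT) //.
  - rewrite (partition_big f xpredT) //=; apply: eq_bigr => i _.
    rewrite scaler_suml; apply: eq_bigr => j /eqP <-; by rewrite fv.
move=> [l [l0 l1 ->]]; exists (size X), l, (fun i : 'I_(size X) => nth 0 (X : seq V) i).
by split => // i; rewrite /= mem_nth.
Qed.

End Cvx.

Section Decomp.
Variables (R : realType) (n m : nat) (a : 'I_m -> 'rV[R]_n) (b : 'I_m -> R).
Local Notation V := ('rV[R]_n).
Local Notation P := (Pab a b).
Implicit Types (u v w x y z p : V).

Lemma Pab_vertex_fin : finite_set (vertex P).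
Proof.
pose g (S : {set 'I_m}) := xget 0 (fun v => vertex P v /\ inact a b v = S).
apply: (sub_finite_set (B := g @` setT)); last exact/finite_image/finite_finset.
move=> v hv; exists (inact a b v) => //.
have [hw hS] := xgetPex 0 (P := fun w => vertex P w /\ inact a b w = inact a b v)
  (ex_intro _ v (conj hv erefl)).
exact: (extreme_inj (vertex_extreme hw) (vertex_extreme hv) hS).
Qed.

Lemma KP_rep : exists N (w : 'I_N -> V), (forall i, vertex P (w i)) /\ KP P = cvx w.
Proof.
have [X hX] := finite_fsetP.1 Pab_vertex_fin.
exists (size X), (fun i => nth 0 (X : seq V) i); split.
  by move=> i; rewrite hX /= mem_nth.
by rewrite /KP hX conv_hull_fset.
Qed.

Definition Cn y := forall i, dotp (a i) y <= 0.

Lemma Cn_conv y1 y2 t : Cn y1 -> Cn y2 -> 0 <= t <= 1 -> Cn (t *: y1 + (1 - t) *: y2).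
Proof.
move=> h1 h2 /andP[t0 t1] i; rewrite dotpDr !dotpZr.
have := h1 i; have := h2 i => g1 g2.
have : 0 <= 1 - t by rewrite subr_ge0.
nra.
Qed.

Lemma CnD y1 y2 : Cn y1 -> Cn y2 -> Cn (y1 + y2).
Proof. by move=> h1 h2 i; rewrite dotpDr; have := h1 i; have := h2 i; lra. Qed.

Lemma CnZ y t : Cn y -> 0 <= t -> Cn (t *: y).
Proof. by move=> h t0 i; rewrite dotpZr; have := h i; nra. Qed.

Lemma push p y : P p -> (forall i, dotp (a i) p = b i -> dotp (a i) y = 0) ->
  (exists j, 0 < dotp (a j) y) ->
  exists2 t, 0 < t & P (p + t *: y) /\ (#|inact a b (p + t *: y)| < #|inact a b p|)%N.
Proof.
move=> Pp hact [j0 hj0].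
pose F j := (b j - dotp (a j) p) / dotp (a j) y.
case: (@arg_minP _ R _ j0 (fun j => 0 < dotp (a j) y) F hj0) => jm Qjm hmin.
have ina : dotp (a jm) p != b jm.
  by apply/eqP => e; move: Qjm; rewrite hact // ltxx.
have ltp : dotp (a jm) p < b jm by rewrite lt_neqAle ina Pp.
exists (F jm).
  by apply: divr_gt0 => //; rewrite subr_gt0.
have Pp1 : P (p + F jm *: y).
  move=> i; rewrite dotpDr dotpZr.
  have [Qi|nQi] := ltP 0 (dotp (a i) y).
    have h := hmin i Qi.
    have h' : F jm * dotp (a i) y <= b i - dotp (a i) p.
      rewrite -[X in _ <= X](divfK (lt0r_neq0 Qi)); apply: ler_wpM2r => //; exact: ltW.
    lra.
  have : 0 <= F jm by apply: divr_ge0; [rewrite subr_ge0 ltW | exact: ltW].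
  have := Pp i; nra.
split=> //; apply: proper_card; apply/properP; split.
  apply/fintype.subsetP => i; rewrite !inE; apply: contra => /eqP e.
  by rewrite dotpDr dotpZr hact // mulr0 addr0 e.
exists jm; first by rewrite inE.
rewrite inE negbK dotpDr dotpZr /F (divfK (lt0r_neq0 Qjm)); apply/eqP; ring.
Qed.

Lemma comb2 p y (s t : R) : 0 < s -> 0 < t ->
  (s / (s + t)) *: (p + t *: y) + (1 - s / (s + t)) *: (p - s *: y) = p.
Proof.
move=> s0 t0.
have st : s + t != 0 by rewrite gt_eqF // addr_gt0.
rewrite !scalerDr !scalerN !scalerA addrACA -scalerDl.
have -> : s / (s + t) + (1 - s / (s + t)) = 1 by ring.
rewrite scale1r -scalerBl.
have -> : s / (s + t) * t - (1 - s / (s + t)) * s = 0 by field.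
by rewrite scale0r addr0.
Qed.

Lemma decomp : (forall y, Cn y -> Cn (- y) -> y = 0) ->
  forall p, P p -> exists2 x, KP P x & Cn (p - x).
Proof.
move=> hpt p0 Pp0.
have [N [w [wv Kw]]] := KP_rep.
rewrite Kw.
suff H : forall k p, (#|inact a b p| < k)%N -> P p -> exists2 x, cvx w x & Cn (p - x).
  exact: (H _ _ (ltnSn _) Pp0).
elim=> [//|k IH] p hk Pp.
have [ext|next] := pselect (extreme P p).
  have : KP P p by exists 1%N, (fun=> 1), (fun=> p); split => //; rewrite ?big_ord1 ?scale1r //; move=> _; apply: extreme_vertex.
  rewrite Kw => Kp; exists p => //; by move=> i; rewrite subrr dotp0r.
have [y [h1 [h2 yn0]]] : exists y, P (p + y) /\ P (p - y) /\ y <> 0.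
  apply: contrapT => H; apply: next; split => // y h1 h2.
  by apply: contrapT => hy; apply: H; exists y.
have hact : forall i, dotp (a i) p = b i -> dotp (a i) y = 0.
  move=> i e; have /= := h1 i; have /= := h2 i; rewrite dotpBr dotpDr e.
  by move=> g1 g2; apply/eqP; rewrite eq_le; apply/andP; split; lra.
have hactN : forall i, dotp (a i) p = b i -> dotp (a i) (- y) = 0.
  by move=> i e; rewrite dotpNr hact // oppr0.
have pos : forall y', ~ Cn y' -> exists j, 0 < dotp (a j) y'.
  move=> y' nC; apply: contrapT => H; apply: nC => i; rewrite leNgt; apply/negP => hi.
  by apply: H; exists i.
have side : forall y', (forall i, dotp (a i) p = b i -> dotp (a i) y' = 0) ->
    Cn y' -> ~ Cn (- y') -> exists2 x, cvx w x & Cn (p - x).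
  move=> y' ha Cy nCy.
  have haN : forall i, dotp (a i) p = b i -> dotp (a i) (- y') = 0.
    by move=> i e; rewrite dotpNr ha // oppr0.
  have [s s0 [Ps hs]] := push Pp haN (pos _ nCy).
  have [x Kx Cx] := IH _ (leq_trans hs hk) Ps.
  exists x => //.
  have -> : p - x = (p + s *: - y' - x) + s *: y' by rewrite scalerN addrAC addrNK.
  by apply: CnD => //; apply: CnZ => //; exact: ltW.
have [Cy|nCy] := pselect (Cn y).
  apply: (side y hact Cy) => CNy; apply: yn0; exact: hpt.
have [CNy|nCNy] := pselect (Cn (- y)).
  apply: (side (- y) hactN CNy); rewrite opprK => //.
have [t t0 [Pt ht]] := push Pp hact (pos _ nCy).
have [s s0 [Ps hs]] := push Pp hactN (pos _ nCNy).
have [x1 Kx1 Cx1] := IH _ (leq_trans ht hk) Pt.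
have [x2 Kx2 Cx2] := IH _ (leq_trans hs hk) Ps.
have l01 : 0 <= s / (s + t) <= 1.
  apply/andP; split; first by apply: divr_ge0; [exact: ltW | rewrite addr_ge0 // ltW].
  by rewrite ler_pdivrMr ?addr_gt0 // mul1r lerDl ltW.
exists (s / (s + t) *: x1 + (1 - s / (s + t)) *: x2); first exact: cvx_conv.
have := Cn_conv Cx1 Cx2 l01.
by rewrite scalerN 2!scalerBr addrACA comb2 // -opprD.
Qed.

End Decomp.

Section Base.
Variables (R : realType) (n : nat).
Local Notation V := ('rV[R]_n).
Implicit Types (P F : set V) (u v w x y z p : V).

Lemma cvx_sub_Pab m (a : 'I_m -> V) b N (w : 'I_N -> V) :
  (forall i, Pab a b (w i)) -> cvx w `<=` Pab a b.
Proof.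
move=> hw x [l [l0 l1 ->]] i; rewrite dotp_sum.
apply: (le_trans (y := \sum_j l j * b i)); last by rewrite -mulr_suml l1 mul1r.
by apply: ler_sum => j _; rewrite dotpZr ler_wpM2l //; apply: hw.
Qed.

Lemma KP_sub P : polyhedral P -> KP P `<=` P.
Proof.
move=> [m [a [b ->]]]; have [N [w [wv ->]]] := KP_rep a b.
apply: cvx_sub_Pab => i; have [] := vertex_extreme (wv i); done.
Qed.

Lemma pointed_Cn m (a : 'I_m -> V) b z : Pab a b z -> pointed (Pab a b) ->
  forall y, Cn a y -> Cn a (- y) -> y = 0.
Proof.
move=> Pz hp y h1 h2.
have : (char_cone (Pab a b) `&` [set - y | y in char_cone (Pab a b)]) y.
  split; first exact: cone_rep.
  by exists (- y); [exact: cone_rep | rewrite opprK].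
by rewrite hp.
Qed.

Lemma enorm_lip x y : `|enorm x - enorm y| <= enorm (x - y).
Proof.
rewrite ler_norml; apply/andP; split.
  have := enormD (y - x) x; rewrite subrK enormB; lra.
have := enormD (x - y) y; rewrite subrK; lra.
Qed.

Lemma enorm_cont p : continuous (fun x : V => enorm (p - x) : R^o).
Proof.
apply: (@lip_cont R V R^o _ (n%:R + 1)) => x y.
apply: (le_trans (enorm_lip _ _)).
rewrite opprB addrC addrA addrNK enormB; exact: enorm_le_mxnorm.
Qed.

Lemma base_exists P p : polyhedral P -> pointed P -> P p -> exists x, is_base P p x.
Proof.
move=> [m [a [b ->]]] hp Pp.
have [N [w [wv Kw]]] := KP_rep a b.
pose S := cvx w `&` [set x | Cn a (p - x)].
have S0 : S !=set0.
  have [x Kx Cx] := decomp (pointed_Cn Pp hp) Pp.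
  by exists x; split => //; rewrite -Kw.
have Scl : closed [set x | Cn a (p - x)].
  have -> : [set x | Cn a (p - x)] = Pab (fun i => - a i) (fun i => - dotp (a i) p).
    apply/seteqP; split => x /= h i; have := h i; rewrite ?dotpBr dotpNl; lra.
  exact: Pab_closed.
have Sc : compact S by apply: compact_closedI => //; exact: cvx_compact.
have [c cS hc] := EVT_min_rV S0 Sc (continuous_subspaceT (@enorm_cont p)).
move: cS => /set_mem [Kc Cc].
exists c; split; first by rewrite Kw.
  exact: cone_rep.
move=> y Ky Cy; apply: hc; apply/mem_set; split; first by rewrite -Kw.
exact: cone_repE Pp Cy.
Qed.

Lemma comb_sub p x1 x2 (t : R) :
  p - (t *: x1 + (1 - t) *: x2) = t *: (p - x1) + (1 - t) *: (p - x2).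
Proof.
rewrite !scalerBr addrACA -scalerDl.
have -> : t + (1 - t) = 1 by ring.
by rewrite scale1r opprD.
Qed.

Lemma base_unique P p x1 x2 : polyhedral P -> P p ->
  is_base P p x1 -> is_base P p x2 -> x1 = x2.
Proof.
move=> [m [a [b ->]]] Pp [K1 C1 h1] [K2 C2 h2].
have [N [w [wv Kw]]] := KP_rep a b.
pose t : R := 2^-1.
have t01 : 0 <= t <= 1 by rewrite /t invr_ge0 ler0n /= invf_le1 ?ler1n.
have Km : KP (Pab a b) (t *: x1 + (1 - t) *: x2).
  by rewrite Kw; apply: cvx_conv; rewrite -?Kw.
have Cm : char_cone (Pab a b) (p - (t *: x1 + (1 - t) *: x2)).
  apply: cone_rep.
  rewrite comb_sub.
  by apply: Cn_conv => //; apply: cone_repE Pp _.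
have e12 := h1 _ K2 C2; have e21 := h2 _ K1 C1.
have hm := h1 _ Km Cm.
have E : enorm (p - x1) = enorm (p - x2) by apply/eqP; rewrite eq_le e12 e21.
have : enorm (x1 - x2) ^+ 2 <= 0.
  have hm2 : enorm (p - x1) ^+ 2 <= enorm (p - (t *: x1 + (1 - t) *: x2)) ^+ 2.
    by rewrite lerXn2r ?nnegrE ?enorm_ge0.
  move: hm2; rewrite !enorm_sq.
  rewrite comb_sub.
  have -> : x1 - x2 = (p - x2) - (p - x1).
    by rewrite [in RHS]opprB [in RHS]addrC [in RHS]addrA [in RHS]addrNK.
  move: E => /(congr1 (fun r => r ^+ 2)); rewrite !enorm_sq.
  move: (p - x1) (p - x2) => u v E.
  rewrite !dotpBl !dotpBr !dotpDl !dotpDr !dotpZl !dotpZr (dotpC v u) /t.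
  move=> h; lra.
rewrite le_eqVlt ltNge sqr_ge0 orbF expf_eq0 /= => /eqP /enorm_eq0 /eqP.
by rewrite subr_eq0 => /eqP.
Qed.

Lemma base_spec P p : polyhedral P -> pointed P -> P p -> is_base P p (base P p).
Proof.
move=> hP hp Pp; apply: xgetPex; exact: base_exists.
Qed.

Lemma base_eq P p x : polyhedral P -> P p -> is_base P p x -> base P p = x.
Proof.
move=> hP Pp hx; apply: (base_unique hP Pp) => //.
by apply: (xgetPex 0 (P := is_base P p)); exists x.
Qed.

End Base.

Section Face.
Variables (R : realType) (n : nat).
Local Notation V := ('rV[R]_n).
Implicit Types (P F : set V) (u v w x y z p c : V).

Lemma vertex_face P F c d v : (forall x, P x -> dotp c x <= d) ->
  F = P `&` [set x | dotp c x = d] -> vertex P v -> dotp c v = d -> vertex F v.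
Proof.
move=> hle HF [c' [d' [hle' HV]]] cv.
have Pv : P v by have : [set v] v by []; rewrite HV; case.
exists c', d'; split.
  by move=> x; rewrite HF => -[Px _]; apply: hle'.
rewrite HF; apply/seteqP; split => x /=.
  move=> ->; split; first by split.
  by have : [set v] v by []; rewrite HV; case.
move=> [[Px cx] c'x]; have : (P `&` [set x | dotp c' x = d']) x by [].
by rewrite -HV.
Qed.

Lemma vertex_face_up m (a : 'I_m -> V) b F c d v :
  (forall x, Pab a b x -> dotp c x <= d) ->
  F = Pab a b `&` [set x | dotp c x = d] -> vertex F v -> vertex (Pab a b) v.
Proof.
move=> hle HF /vertex_extreme [Fv hF]; apply: extreme_vertex.
have [Pv cv] : Pab a b v /\ dotp c v = d by move: Fv; rewrite HF.
split=> // y h1 h2; apply: hF.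
  rewrite HF; split => //=; have := hle _ h1; have := hle _ h2.
  rewrite dotpBr dotpDr cv => g1 g2; lra.
rewrite HF; split => //=; have := hle _ h1; have := hle _ h2.
rewrite dotpBr dotpDr cv => g1 g2; lra.
Qed.

Lemma conv_hull_mono (S T : set V) : S `<=` T -> conv_hull S `<=` conv_hull T.
Proof.
by move=> ST x [k [l [v [l0 l1 vS ->]]]]; exists k, l, v; split => // i; apply: ST.
Qed.

Lemma face_base P F p : polyhedral P -> polyhedral F -> pointed P ->
  face P F -> F p -> base F p = base P p.
Proof.
move=> hP hF hpt [c [d [hle HF]]] Fp.
have [Pp cp] : P p /\ dotp c p = d by move: Fp; rewrite HF.
have hx := base_spec hP hpt Pp; set x := base P p in hx *.
case: hx => Kx Cx hmin.
have cpx : dotp c (p - x) <= 0 := cone_supp hle Pp Cx.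
have cx : dotp c x <= d := hle _ (KP_sub hP Kx).
have ecx : dotp c x = d.
  by apply/eqP; rewrite eq_le cx /=; move: cpx; rewrite dotpBr cp; lra.
apply: base_eq => //; split.
- move: Kx => [k [l [v [l0 l1 vv xE]]]].
  have hz : forall j, l j * (d - dotp c (v j)) = 0.
    have hs : \sum_j l j * (d - dotp c (v j)) = 0.
      have -> : \sum_j l j * (d - dotp c (v j)) = \sum_j l j * d - \sum_j l j * dotp c (v j).
        by rewrite -sumrB; apply: eq_bigr => j _; rewrite mulrBr.
      rewrite -mulr_suml l1 mul1r.
      have -> : \sum_j l j * dotp c (v j) = dotp c x.
        by rewrite xE dotp_sum; apply: eq_bigr => j _; rewrite dotpZr.
      by rewrite ecx subrr.
    move=> j; move/eqP: hs; rewrite psumr_eq0 => [/allP H|j' _].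
      by apply/eqP; apply: H; exact: mem_index_enum.
    apply: mulr_ge0 => //; rewrite subr_ge0; apply: hle.
    by have [] := vertex_extreme (vv j').
  have [j0 hj0] : exists j, l j != 0.
    apply: contrapT => H; move: l1; rewrite big1 => [/esym/eqP|j _]; first by rewrite oner_eq0.
    by apply/eqP; apply: contrapT => hj; apply: H; exists j; apply/negP.
  have vF : forall j, l j != 0 -> vertex F (v j).
    move=> j hj; apply: (vertex_face hle HF (vv j)).
    have := hz j; move/eqP; rewrite mulf_eq0 (negPf hj) /= subr_eq0 => /eqP; done.
  exists k, l, (fun j => if l j == 0 then v j0 else v j); split => //.
    by move=> j /=; case: ifP => [_|/negbT]; [exact: vF | exact: vF].
  rewrite xE; apply: eq_bigr => j _; case: ifP => // /eqP ->; by rewrite !scale0r.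
- move=> z; rewrite HF => -[Pz cz]; split; first exact: Cx.
  by rewrite /= dotpDr cz; move: cpx; rewrite dotpBr cp; lra.
- move=> y Ky Cy; apply: hmin.
    move: hP => [m [a [b EP]]].
    apply: conv_hull_mono Ky => v hv; rewrite EP.
    apply: (vertex_face_up (c := c) (d := d) (F := F)) hv.
      by rewrite /Pab -EP.
    by rewrite /Pab -EP.
  move: hP => [m [a [b EP]]]; rewrite EP; apply: (@cone_rep _ _ _ a b) => i.
  apply: (cone_supp (P := F) (d := b i)) Fp Cy => z; rewrite HF EP => -[Pz _].
  exact: Pz.
Qed.

End Face.

Section Cont.
Variables (R : realType) (n m : nat) (a : 'I_m -> 'rV[R]_n) (b : 'I_m -> R).
Local Notation V := ('rV[R]_n).
Local Notation P := (Pab a b).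
Implicit Types (u v w x y z p : V).

Lemma Pab_poly : polyhedral P.
Proof. by exists m, a, b. Qed.

Lemma enorm_ptri p q x : enorm (p - x) <= enorm (p - q) + enorm (q - x).
Proof. by have := enormD (p - q) (q - x); rewrite addrA addrNK. Qed.

Lemma base_lsc p0 : pointed P -> P p0 ->
  exists2 d0 : R, 0 < d0 & exists C0 : R, 0 <= C0 /\ forall p, P p -> enorm (p - p0) <= d0 ->
    enorm (p - base P p) <= enorm (p0 - base P p0) + C0 * enorm (p - p0).
Proof.
move=> hpt Pp0.
have [Kx0 Cx0 _] := base_spec Pab_poly hpt Pp0; set x0 := base P p0 in Kx0 Cx0 *.
have [N [w [wv Kw]]] := KP_rep a b.
have hpos : forall j, dotp (a j) p0 != b j -> 0 < b j - dotp (a j) p0.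
  by move=> j hj; rewrite subr_gt0 lt_neqAle hj Pp0.
have [s s0 hs] := pos_lb hpos.
pose L := \sum_j enorm (a j) + 1.
have L0 : 0 < L by rewrite ltr_pwDr // sumr_ge0 // => j _; exact: enorm_ge0.
have hL : forall j, enorm (a j) <= L.
  move=> j; rewrite /L (bigD1 j) //= -addrA lerDl addr_ge0 //.
  by apply: sumr_ge0 => i _; exact: enorm_ge0.
pose B := \sum_i enorm (w i).
have B0 : 0 <= B by apply: sumr_ge0 => i _; exact: enorm_ge0.
have Kx0' : cvx w x0 by rewrite -Kw.
exists (s / L); first by apply: divr_gt0.
exists (1 + 2 * B * L / s); split.
  by apply: addr_ge0 => //; apply: divr_ge0; [rewrite !mulr_ge0 // ltW | exact: ltW].
move=> p Pp hr.
have [r0|rn0] := eqVneq (enorm (p - p0)) 0.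
  have : p - p0 = 0 by apply: enorm_eq0.
  by move/eqP; rewrite subr_eq0 => /eqP ->; rewrite subrr enorm0 mulr0 addr0.
set r := enorm (p - p0) in hr rn0 *.
have r0 : 0 < r by rewrite lt_def rn0 enorm_ge0.
pose t := r * L / s.
have t0 : 0 < t by rewrite /t !mulr_gt0 // invr_gt0.
have t1 : t <= 1 by rewrite /t ler_pdivrMr // mul1r -ler_pdivlMr.
have tn0 : t != 0 by rewrite gt_eqF.
pose q := p0 + t^-1 *: (p - p0).
have Pq : P q.
  move=> j; rewrite /q dotpDr dotpZr.
  have [e|ne] := eqVneq (dotp (a j) p0) (b j).
    have : dotp (a j) (p - p0) <= 0 by rewrite dotpBr e; have := Pp j; lra.
    have : 0 <= t^-1 by rewrite invr_ge0 ltW.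
    rewrite e; nra.
  have h1 : dotp (a j) (p - p0) <= t * s.
    apply: (le_trans (ler_norm _)); apply: (le_trans (dotp_norm _ _)).
    rewrite /t divfK ?gt_eqF // mulrC; apply: ler_wpM2l => //; exact: enorm_ge0.
  have h2 : t^-1 * dotp (a j) (p - p0) <= s.
    have -> : s = t^-1 * (t * s) by rewrite mulKf.
    by apply: ler_wpM2l => //; rewrite invr_ge0 ltW.
  have := hs j ne; lra.
have [yq Kyq Cyq] := decomp (pointed_Cn Pp hpt) Pq.
rewrite Kw in Kyq.
pose y' := t *: yq + (1 - t) *: x0.
have t01 : 0 <= t <= 1 by rewrite ltW.
have Ky' : KP P y' by rewrite Kw; apply: cvx_conv.
have pE : p - y' = t *: (q - yq) + (1 - t) *: (p0 - x0).
  by apply/rowP => i; rewrite !mxE; field.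
have Cy' : char_cone P (p - y').
  by apply: cone_rep; rewrite pE; apply: Cn_conv => //; apply: cone_repE Pp0 Cx0.
have [_ _ hmin] := base_spec Pab_poly hpt Pp.
apply: (le_trans (hmin _ Ky' Cy')).
have pE2 : p - y' = (p - p0) + (p0 - x0) + t *: (x0 - yq).
  by apply/rowP => i; rewrite !mxE; ring.
rewrite pE2.
apply: (le_trans (enormD _ _)); rewrite enormZ (ger0_norm (ltW t0)).
have hb : enorm (x0 - yq) <= 2 * B.
  apply: (le_trans (enormD _ _)); rewrite enormN.
  by have := cvx_bound Kx0'; have := cvx_bound Kyq; rewrite -/B; lra.
have := enormD (p - p0) (p0 - x0).
have e1 : t * enorm (x0 - yq) <= t * (2 * B) by apply: ler_wpM2l => //; exact: ltW.
have e2 : t * (2 * B) = (2 * B * L / s) * r by rewrite /t; field; rewrite gt_eqF.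
rewrite -/r; lra.
Qed.

End Cont.

Section Cont2.
Variables (R : realType) (n m : nat) (a : 'I_m -> 'rV[R]_n) (b : 'I_m -> R).
Local Notation V := ('rV[R]_n).
Local Notation P := (Pab a b).
Local Notation M := ((n%:R : R) + 1).
Implicit Types (u v w x y z p : V).

Lemma M_gt0 : (0 : R) < M.
Proof. by rewrite ltr_pwDr. Qed.

Lemma enorm_small u (d : R) : `|u| < d -> enorm u <= M * d.
Proof.
move=> h; apply: (le_trans (enorm_le_mxnorm u)); apply: ler_wpM2l; first exact: ltW M_gt0.
exact: ltW.
Qed.

Lemma dotp_small c u (d : R) : `|u| < d -> dotp c u <= (enorm c + 1) * (M * d).
Proof.
move=> h; apply: (le_trans (ler_norm _)); apply: (le_trans (dotp_norm _ _)).
have := enorm_small h; have := enorm_ge0 c; have := enorm_ge0 u.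
have : 0 <= M * d by apply: mulr_ge0; [exact: ltW M_gt0 | apply: le_trans (normr_ge0 u) (ltW h)].
nra.
Qed.

Lemma base_cont : pointed P -> {within P, continuous (base P)}.
Proof.
move=> hpt; apply/subspace_continuousP => p0 Pp0.
set f := base P.
have [Kx0 Cx0 hmin0] := base_spec (Pab_poly a b) hpt Pp0.
have [N [w [wv Kw]]] := KP_rep a b.
have [d0 d00 [C0 [C00 hlsc]]] := base_lsc hpt Pp0.
have fK : forall p, P p -> cvx w (f p).
  by move=> p Pp; rewrite -Kw; have [] := base_spec (Pab_poly a b) hpt Pp.
have PF : ProperFilter (within P (nbhs p0)) by apply: within_nbhs_proper; exact: subset_closure.
have key : forall x, cluster (f @ within P (nbhs p0)) x -> forall d : R, 0 < d ->
    exists p, [/\ P p, `|p0 - p| < d & `|x - f p| < d].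
  move=> x hx d dpos.
  have := hx (f @` (P `&` [set p | `|p0 - p| < d])) (ball x d).
  case.
  - rewrite /= /within; have := near_dist p0 dpos; apply: filterS => p h Pp.
    by exists p.
  - exact: nbhsx_ballx.
  move=> y [[p [Pp hp] <-]]; rewrite -ball_normE /ball_ /= => hb.
  by exists p.
have claim : cluster (f @ within P (nbhs p0)) `<=` [set f p0].
  move=> x hx.
  have hK : cvx w x.
    have : closed (cvx w) by apply: compact_closed; [exact: norm_hausdorff | exact: cvx_compact].
    rewrite closure_id => ->.
    move=> B /nbhs_ballP [d dpos hB].
    have [p [Pp _ hp]] := key x hx d dpos.
    exists (f p); split; first exact: fK.
    by apply: hB; rewrite -ball_normE /ball_ /=.
  have hC : Cn a (p0 - x).
    move=> i; apply/ler_addgt0Pr => e e0; rewrite add0r.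
    have c0 : 0 < (enorm (a i) + 1) * M by apply: mulr_gt0; [rewrite ltr_pwDr // enorm_ge0 | exact: M_gt0].
    pose d := e / (2 * ((enorm (a i) + 1) * M)).
    have dpos : 0 < d by apply: divr_gt0 => //; apply: mulr_gt0.
    have [p [Pp h1 h2]] := key x hx d dpos.
    have [_ Cp _] := base_spec (Pab_poly a b) hpt Pp.
    have g1 := cone_repE Pp Cp i.
    have g2 := dotp_small (a i) h1.
    have h2' : `|f p - x| < d by rewrite -normrN opprB.
    have g3 := dotp_small (a i) h2'.
    have E : dotp (a i) (p0 - x) = dotp (a i) (p - f p) + dotp (a i) (p0 - p) + dotp (a i) (f p - x).
      by rewrite -!dotpDr; congr dotp; apply/rowP => j; rewrite !mxE; ring.
    have Ed : (enorm (a i) + 1) * (M * d) = e / 2.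
      rewrite /d mulrA; field; apply/andP; split; apply/negP => /eqP h;
        [have := ler0n R n | have := enorm_ge0 (a i)]; lra.
    lra.
  have hE : enorm (p0 - x) <= enorm (p0 - f p0).
    apply/ler_addgt0Pr => e e0.
    have hb : forall bb : bool, true -> 0 < (if bb then d0 / M else e / (M * (2 + C0))).
      case=> _ /=; apply: divr_gt0 => //.
      by apply: mulr_gt0; [exact: M_gt0 | have := C00; lra].
    have [d d0' hd] := pos_lb hb.
    have hd1 := hd true erefl; have hd2 := hd false erefl; rewrite /= in hd1 hd2.
    have [p [Pp h1 h2]] := key x hx d d0'.
    have g1 := enorm_small h1.
    have h2' : `|f p - x| < d by rewrite -normrN opprB.
    have g3 := enorm_small h2'.
    have g1' : enorm (p - p0) <= d0.
      rewrite enormB; apply: (le_trans g1); rewrite -ler_pdivlMl // mulrC; exact: hd1.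
    have g2 := hlsc p Pp g1'.
    have t1 := enorm_ptri p0 p x; have t2 := enorm_ptri p (f p) x.
    have e3 : M * d * (2 + C0) <= e.
      have hMp : 0 < M * (2 + C0) by apply: mulr_gt0; [exact: M_gt0 | lra].
      by move: hd2; rewrite ler_pdivlMr // => h; lra.
    have : C0 * enorm (p - p0) <= C0 * (M * d) by apply: ler_wpM2l => //; rewrite enormB.
    rewrite -/f in g2 t2 *; rewrite enormB in g1; rewrite (enormB p0 p) in t1; lra.
  have : is_base P p0 x.
    split; first by rewrite Kw.
      exact: cone_rep.
    move=> y Ky Cy; exact: le_trans hE (hmin0 _ Ky Cy).
  by move/(base_eq (Pab_poly a b) Pp0) => <-.
pose V0 := cvx w `|` closed_ball (f p0) 1.
have V0c : compact V0.
  apply: compactU; first exact: cvx_compact.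
  apply: bounded_closed_compact; last exact: closed_ball_closed.
  rewrite /= /bounded_near; near=> M' => y /=.
  rewrite closed_ballE //= => hy.
  apply: (le_trans (y := `|f p0| + 1)); last by near: M'; apply: nbhs_pinfty_ge; rewrite num_real.
  have := ler_normB (f p0) (f p0 - y); rewrite opprB addrC subrK => h.
  move: hy; rewrite /closed_ball_ /=; lra.
have FV0 : (f @ within P (nbhs p0)) V0.
  by apply: nearW => p Pp; left; apply: fK.
apply: (@compact_cluster_set1 _ (f p0) _ V0) => //.
- apply: (@filterS _ _ _ (closed_ball (f p0) 1)); first by move=> y hy; right.
  apply: (filterS (@subset_closed_ball _ _ _ _)); exact: nbhsx_ballx.
apply/seteqP; split => // _ ->.
have [y [_ hy]] := V0c _ _ FV0.
by have := claim _ hy => /= <-.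
Unshelve. all: end_near.
Qed.

End Cont2.

Section Main.
Variables (R : realType) (n : nat).
Local Notation V := ('rV[R]_n).

Fixpoint Useq (s : seq (set V)) : set V := if s is P :: s' then P `|` Useq s' else set0.

Lemma UseqE s x : Useq s x <-> exists2 P, P \in s & P x.
Proof.
elim: s => [|P s IH] /=; first by split => // -[P]; rewrite in_nil.
split.
  case=> [Px|/IH [Q Qs Qx]]; first by exists P => //; rewrite mem_head.
  by exists Q => //; rewrite in_cons Qs orbT.
move=> [Q]; rewrite in_cons => /orP [/eqP -> Qx|Qs Qx]; first by left.
by right; apply/IH; exists Q.
Qed.

Lemma Useq_cont (f : V -> V) s :
  (forall P, P \in s -> closed P /\ {within P, continuous f}) ->
  closed (Useq s) /\ {within Useq s, continuous f}.
Proof.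
elim: s => [|P s IH] h /=; first by split; [exact: closed0 | exact: continuous_subspace0].
have [cP fP] := h P (mem_head _ _).
have [cs fs] := IH (fun Q Qs => h Q (@mem_behead _ (P :: s) Q Qs)).
split; first exact: closedU.
exact: withinU_continuous.
Qed.

Lemma fst_within' (D : set (V * R)) (q0 : V * R) :
  (fun q : V * R => q.1) @ within D (nbhs q0) --> q0.1.
Proof. apply: cvg_trans (cvg_fmap2 (cvg_within _)) _. exact: cvg_fst. Qed.

Lemma fst_within (D : set (V * R)) (X : set V) (g : V -> V) (q0 : V * R) :
  {within X, continuous g} -> (forall q, D q -> X q.1) -> D q0 ->
  (fun q : V * R => g q.1) @ within D (nbhs q0) --> g q0.1.
Proof.
move=> /subspace_continuousP hg Dsub Dq0 B hB.
have W := hg _ (Dsub _ Dq0) B hB.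
have hf := @fst_within' D q0.
have h3 := hf (fun x => X x -> B (g x)) W.
change (nbhs q0 (fun q : V * R => D q -> B (g q.1))).
change (nbhs q0 (fun q : V * R => D q -> X q.1 -> B (g q.1))) in h3.
move: h3; apply: filterS => q hq Dq.
exact: (hq Dq (Dsub _ Dq)).
Qed.

Lemma snd_within (D : set (V * R)) (q0 : V * R) :
  (fun q : V * R => q.2) @ within D (nbhs q0) --> q0.2.
Proof. apply: cvg_trans (cvg_fmap2 (cvg_within _)) _. exact: cvg_snd. Qed.

End Main.

Theorem mainTheorem12 (R : realType) (n : nat) (C : set (set 'rV[R]_n)) :
  polyhedral_complex C ->
  (forall P, C P -> P !=set0 -> pointed P) ->
  (forall P p, C P -> P p -> exists! x, is_base P p x) /\
  [/\ (forall P1 P2 p, C P1 -> C P2 -> P1 p -> P2 p -> base P1 p = base P2 p),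
      (forall P p, C P -> P p -> baseC C p = base P p),
      (forall p, cplx_support C p -> cplx_support (com_part C) (baseC C p)),
      {within cplx_support C, continuous (baseC C)} &
      strong_deformation_retraction (cplx_support C) (cplx_support (com_part C))
        (fun q : 'rV[R]_n * R => q.2 *: baseC C q.1 + (1 - q.2) *: q.1)].
Proof.
move=> [Cfin Cpoly Cface Cint] Cpt.
have ptd : forall P p, C P -> P p -> pointed P.
  by move=> P p CP Pp; apply: Cpt => //; exists p.
have part1 : forall P p, C P -> P p -> exists! x, is_base P p x.
  move=> P p CP Pp; have [x hx] := base_exists (Cpoly P CP) (ptd P p CP Pp) Pp.
  exists x; split => // y hy; exact: base_unique (Cpoly P CP) Pp hx hy.
have parta : forall P1 P2 p, C P1 -> C P2 -> P1 p -> P2 p -> base P1 p = base P2 p.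
  move=> P1 P2 p C1 C2 p1 p2.
  have [f1 f2] := Cint P1 P2 C1 C2.
  have CF := Cface P1 _ C1 f1.
  have Fp : (P1 `&` P2) p by split.
  rewrite -(face_base (Cpoly P1 C1) (Cpoly _ CF) (ptd _ _ C1 p1) f1 Fp).
  by rewrite (face_base (Cpoly P2 C2) (Cpoly _ CF) (ptd _ _ C2 p2) f2 Fp).
have partb : forall P p, C P -> P p -> baseC C p = base P p.
  move=> P p CP Pp; rewrite /baseC.
  have [P' [CP' [P'p ->]]] := xgetPex 0 (P := [set x | exists P, C P /\ P p /\ x = base P p])
    (ex_intro _ (base P p) (ex_intro _ P (conj CP (conj Pp erefl)))).
  exact: parta.
have KPface : forall P : set 'rV[R]_n, face (KP P) (KP P).
  move=> P; exists 0, 0; split; first by move=> x _; rewrite dotp0l.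
  apply/seteqP; split => x /=; last by case.
  by move=> h; split => //; rewrite /= dotp0l.
have partc : forall p, cplx_support C p -> cplx_support (com_part C) (baseC C p).
  move=> p [P CP Pp]; exists (KP P); first by exists P.
  rewrite (partb P p CP Pp); have [] := base_spec (Cpoly P CP) (ptd _ _ CP Pp) Pp; done.
have cellcont : forall P, C P -> closed P /\ {within P, continuous (baseC C)}.
  move=> P CP; have [m [a [b EP]]] := Cpoly P CP.
  split; first by rewrite EP; exact: Pab_closed.
  have [[p Pp]|P0] := pselect (P !=set0); last first.
    have -> : P = set0 by apply/seteqP; split => x // Px; apply: P0; exists x.
    exact: continuous_subspace0.
  apply: (@subspace_eq_continuous _ P _ (base P)).
    by move=> x /set_mem Px; rewrite /from_subspace (partb P x CP Px).
  have hpt := ptd P p CP Pp.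
  move: hpt; rewrite EP => hpt; exact: (base_cont hpt).
have partd : {within cplx_support C, continuous (baseC C)}.
  have [X hX] := finite_fsetP.1 Cfin.
  have -> : cplx_support C = Useq (X : seq (set 'rV[R]_n)).
    apply/seteqP; split => x.
      by move=> [P CP Px]; apply/UseqE; exists P => //; move: CP; rewrite hX.
    by move=> /UseqE [P PX Px]; exists P => //; rewrite hX.
  apply: (Useq_cont _).2 => P PX; apply: cellcont; rewrite hX.
  exact: PX.
have baseA : forall y, cplx_support (com_part C) y -> baseC C y = y.
  move=> y [F [P CP [c [d [_ HF]]]] Fy].
  have Ky : KP P y by move: Fy; rewrite HF; case.
  have Py := KP_sub (Cpoly P CP) Ky.
  rewrite (partb P y CP Py); apply: base_eq (Cpoly P CP) Py _.
  split => //; first by move=> z Pz; rewrite subrr addr0.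
  by move=> z _ _; rewrite subrr enorm0 enorm_ge0.
split => //; split => //; split.
- move=> y [F [P CP [c [d [_ HF]]]] Fy]; exists P => //.
  apply: (KP_sub (Cpoly P CP)); move: Fy; rewrite HF; case => //.
split.
- move=> x t [P CP Px] /andP[t0 t1]; exists P => //=.
  rewrite (partb P x CP Px).
  have Kb : P (base P x).
    apply: (KP_sub (Cpoly P CP)).
    by have [] := base_spec (Cpoly P CP) (ptd _ _ CP Px) Px.
  have [m [a [b EP]]] := Cpoly P CP.
  move: Px Kb; rewrite EP => Px Kb.
  by apply: (@Pab_conv _ _ _ a b _ _ t Kb Px); rewrite t0 t1.
- apply/subspace_continuousP => q0 [Xq0 Iq0].
  apply: cvgD.
    apply: cvgZ; first exact: snd_within.
    by apply: (fst_within partd) => // q [].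
  apply: cvgZ; last exact: fst_within'.
  by apply: cvgB; [exact: cvg_cst | exact: snd_within].
- by move=> x _; rewrite /= scale0r add0r subr0 scale1r.
- by move=> x hx; rewrite /= scale1r subrr scale0r addr0; exact: partc.
- move=> y t hy _; rewrite /= baseA //.
  by apply/rowP => i; rewrite !mxE; ring.
Qed.
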